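(* Let $H_0,H_1$ be complex Hilbert spaces, $G$ a densely defined closed operator from $H_0$ into $H_1$ and $D$ a densely defined closed operator from $H_1$ into $H_0$ with $-G^*\subset D$. Then $\mathrm{BD}(G)=\ker(I-DG)$ and $\mathrm{BD}(D)=\ker(I-GD)$.
   Context: $\mathring D=-G^*$, $\mathring G=-D^*$. Domains carry graph inner products, e.g. $(u,v)_{\mathrm{dom}(G)}=(u,v)_{H_0}+(Gu,Gv)_{H_1}$. $\mathrm{BD}(G)$ is the orthogonal complement of $\mathrm{dom}(\mathring G)$ in $\mathrm{dom}(G)$ and $\mathrm{BD}(D)$ the orthogonal complement of $\mathrm{dom}(\mathring D)$ in $\mathrm{dom}(D)$. $\ker(I-DG)=\{u\in\mathrm{dom}(G):Gu\in\mathrm{dom}(D),\ DGu=u\}$ and $\ker(I-GD)=\{q\in\mathrm{dom}(D):Dq\in\mathrm{dom}(G),\ GDq=q\}$. *)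

(* Defs.v *)
From HB Require Import structures.
From mathcomp Require Import all_boot all_order all_algebra.
From mathcomp Require Import reals complex.
From Stdlib Require Import ClassicalEpsilon.
Set Implicit Arguments. Unset Strict Implicit. Unset Printing Implicit Defensive.
Import Order.TTheory GRing.Theory Num.Theory.
Local Open Scope ring_scope.

Section Hilbert.
Variables (R : realType).
Local Notation C := (R[i]).

Definition is_inner (V : lmodType C) (ip : V -> V -> C) : Prop :=
  [/\ (forall (a : C) (x y z : V), ip (a *: x + y) z = a * ip x z + ip y z),
      (forall x y : V, ip y x = Num.conj (ip x y)),
      (forall x : V, 0 <= ip x x) &
      (forall x : V, ip x x = 0 -> x = 0)].

Definition ipnorm (V : lmodType C) (ip : V -> V -> C) (x : V) : R :=
  Num.sqrt (complex.Re (ip x x)).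

Definition ip_cauchy (V : lmodType C) (ip : V -> V -> C) (u : nat -> V) :=
  forall e : R, 0 < e -> exists N : nat, forall m n : nat,
    (N <= m)%N -> (N <= n)%N -> ipnorm ip (u m - u n) < e.

Definition ip_cvg (V : lmodType C) (ip : V -> V -> C) (u : nat -> V) (l : V) :=
  forall e : R, 0 < e -> exists N : nat, forall n : nat,
    (N <= n)%N -> ipnorm ip (u n - l) < e.

Definition is_hilbert (V : lmodType C) (ip : V -> V -> C) : Prop :=
  is_inner ip /\ forall u : nat -> V, ip_cauchy ip u -> exists l, ip_cvg ip u l.

End Hilbert.

Record op (U V : Type) := Op { dom : U -> Prop; app : U -> V }.

Section Operators.
Variables (R : realType).
Local Notation C := (R[i]).
Variables (U V : lmodType C) (ipU : U -> U -> C) (ipV : V -> V -> C).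

Definition is_linop (T : op U V) : Prop :=
  dom T 0 /\
  forall (a : C) (x y : U), dom T x -> dom T y ->
    dom T (a *: x + y) /\ app T (a *: x + y) = a *: app T x + app T y.

Definition densely_defined (T : op U V) : Prop :=
  forall (x : U) (e : R), 0 < e -> exists y, dom T y /\ ipnorm ipU (x - y) < e.

Definition closed_op (T : op U V) : Prop :=
  forall (u : nat -> U) (x : U) (y : V),
    (forall n, dom T (u n)) -> ip_cvg ipU u x -> ip_cvg ipV (fun n => app T (u n)) y ->
    dom T x /\ app T x = y.

Definition adj_rel (T : op U V) (y : V) (z : U) : Prop :=
  forall x, dom T x -> ipV (app T x) y = ipU x z.

Definition adjoint (T : op U V) : op V U :=
  Op (fun y => exists z, adj_rel T y z)
     (fun y => epsilon (inhabits (0 : U)) (fun z => adj_rel T y z)).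

End Operators.

Definition op_neg (U : Type) (V : zmodType) (T : op U V) : op U V :=
  Op (dom T) (fun x => - app T x).

Definition op_sub (U V : Type) (A B : op U V) : Prop :=
  forall x, dom A x -> dom B x /\ app B x = app A x.

(* BD(T): orthogonal complement of dom(T0) in dom(T) for the graph inner
   product (u,v)_{dom T} = (u,v) + (Tu,Tv) *)
Definition BD (R : realType) (U V : lmodType (R[i]))
  (ipU : U -> U -> R[i]) (ipV : V -> V -> R[i]) (T T0 : op U V) (u : U) : Prop :=
  dom T u /\ forall v, dom T0 v -> ipU u v + ipV (app T u) (app T v) = 0.

Definition ker_I_comp (U V : Type) (T : op U V) (S : op V U) (u : U) : Prop :=
  dom T u /\ dom S (app T u) /\ app S (app T u) = u.

(* Main.v *)
Require Import Defs.
From HB Require Import structures.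
From mathcomp Require Import all_boot all_order all_algebra.
From mathcomp Require Import reals complex.
From mathcomp Require Import lra ring.
From Stdlib Require Import ClassicalEpsilon.
Import Order.TTheory GRing.Theory Num.Theory.
Set Implicit Arguments. Unset Strict Implicit. Unset Printing Implicit Defensive.
Local Open Scope ring_scope.

Section CHelp.
Variable R : realType.
Implicit Types (z : R[i]) (k : R).

Lemma ReD z1 z2 : complex.Re (z1 + z2) = complex.Re z1 + complex.Re z2.
Proof. by case: z1; case: z2. Qed.
Lemma ImD z1 z2 : complex.Im (z1 + z2) = complex.Im z1 + complex.Im z2.
Proof. by case: z1; case: z2. Qed.
Lemma ReN z : complex.Re (- z) = - complex.Re z.
Proof. by case: z. Qed.
Lemma ImN z : complex.Im (- z) = - complex.Im z.
Proof. by case: z. Qed.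
Lemma ReMr k z : complex.Re (k%:C%C * z) = k * complex.Re z.
Proof. by case: z => a b /=; rewrite mul0r subr0. Qed.
Lemma ImMr k z : complex.Im (k%:C%C * z) = k * complex.Im z.
Proof. by case: z => a b /=; rewrite mul0r addr0. Qed.
Lemma ReJ z : complex.Re (Num.conj z) = complex.Re z.
Proof. by apply: (@complexI R); rewrite complexRe Re_conj -complexRe. Qed.
Lemma ImJ z : complex.Im (Num.conj z) = - complex.Im z.
Proof. by apply: (@complexI R); rewrite complexIm Im_conj -complexIm rmorphN. Qed.
Lemma conj_real k : Num.conj (k%:C%C) = k%:C%C.
Proof. by apply/CrealP; apply/complex_realP; exists k. Qed.
Lemma Re_mNi z : complex.Re (Num.conj 'i * z) = complex.Im z.
Proof. by rewrite conjCi -complexiE; case: z => a b /=; rewrite oppr0 mul0r sub0r mulN1r opprK. Qed.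
Lemma cplx_eq z1 z2 : complex.Re z1 = complex.Re z2 -> complex.Im z1 = complex.Im z2 -> z1 = z2.
Proof. by case: z1; case: z2 => /= ? ? ? ? -> ->. Qed.
End CHelp.

Section IP.
Variables (R : realType) (V : lmodType (R[i])) (ip : V -> V -> R[i]).
Hypothesis hip : is_inner ip.

Definition g (x y : V) : R := complex.Re (ip x y).
Definition N (x : V) : R := g x x.

Lemma ipZDl a x y z : ip (a *: x + y) z = a * ip x z + ip y z.
Proof. by case: hip. Qed.
Lemma ipC x y : ip y x = Num.conj (ip x y).
Proof. by case: hip. Qed.
Lemma ip0l z : ip 0 z = 0.
Proof.
have := ipZDl 1 0 0 z; rewrite scale1r addr0 mul1r => h.
by have := congr1 (fun t => t - ip 0 z) h; rewrite /= subrr addrK.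
Qed.
Lemma ipDl x y z : ip (x + y) z = ip x z + ip y z.
Proof. by rewrite -[x in LHS]scale1r ipZDl mul1r. Qed.
Lemma ipZl a x z : ip (a *: x) z = a * ip x z.
Proof. by rewrite -[a *: x]addr0 ipZDl ip0l addr0. Qed.
Lemma ipNl x z : ip (- x) z = - ip x z.
Proof. by rewrite -scaleN1r ipZl mulN1r. Qed.
Lemma ipBl x y z : ip (x - y) z = ip x z - ip y z.
Proof. by rewrite ipDl ipNl. Qed.
Lemma ipDr x y z : ip z (x + y) = ip z x + ip z y.
Proof. by rewrite (ipC x z) (ipC y z) (ipC (x + y) z) ipDl rmorphD. Qed.
Lemma ipZr a x z : ip z (a *: x) = Num.conj a * ip z x.
Proof. by rewrite (ipC x z) (ipC (a *: x) z) ipZl rmorphM. Qed.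
Lemma ipNr x z : ip z (- x) = - ip z x.
Proof. by rewrite (ipC x z) (ipC (- x) z) ipNl rmorphN. Qed.
Lemma ipBr x y z : ip z (x - y) = ip z x - ip z y.
Proof. by rewrite ipDr ipNr. Qed.

Lemma gC x y : g x y = g y x.
Proof. by rewrite /g ipC ReJ. Qed.
Lemma gDl x y z : g (x + y) z = g x z + g y z.
Proof. by rewrite /g ipDl ReD. Qed.
Lemma gDr x y z : g z (x + y) = g z x + g z y.
Proof. by rewrite /g ipDr ReD. Qed.
Lemma gNl x z : g (- x) z = - g x z.
Proof. by rewrite /g ipNl ReN. Qed.
Lemma gNr x z : g z (- x) = - g z x.
Proof. by rewrite /g ipNr ReN. Qed.
Lemma gBl x y z : g (x - y) z = g x z - g y z.
Proof. by rewrite gDl gNl. Qed.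
Lemma gBr x y z : g z (x - y) = g z x - g z y.
Proof. by rewrite gDr gNr. Qed.
Lemma gZl k x z : g (k%:C%C *: x) z = k * g x z.
Proof. by rewrite /g ipZl ReMr. Qed.
Lemma gZr k x z : g z (k%:C%C *: x) = k * g z x.
Proof. by rewrite gC gZl gC. Qed.
Lemma Im_ip x y : complex.Im (ip x y) = g x ('i *: y).
Proof. by rewrite /g ipZr Re_mNi. Qed.

Lemma N_ge0 x : 0 <= N x.
Proof. by case: hip => _ _ /(_ x); rewrite lecE => /andP[_]. Qed.
Lemma Im_ipxx x : complex.Im (ip x x) = 0.
Proof. by case: hip => _ _ /(_ x); rewrite lecE => /andP[/eqP ->]. Qed.
Lemma N_eq0 x : N x = 0 -> x = 0.
Proof.
move=> h; case: hip => _ _ _; apply; apply: cplx_eq => //.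
by rewrite Im_ipxx.
Qed.
Lemma ND x y : N (x + y) = N x + N y + 2 * g x y.
Proof. rewrite /N gDl !gDr (gC y x); rewrite mulr2n mulrDl mul1r; lra. Qed.
Lemma NB x y : N (x - y) = N x + N y - 2 * g x y.
Proof. rewrite ND gNr /N gNl gNr opprK; lra. Qed.
Lemma NN x : N (- x) = N x.
Proof. by rewrite /N gNl gNr opprK. Qed.
Lemma NZ k x : N (k%:C%C *: x) = k ^+ 2 * N x.
Proof. by rewrite /N gZl gZr mulrA expr2. Qed.
Lemma N2 x : N (x *+ 2) = 4%:R * N x.
Proof. rewrite mulr2n ND /N; lra. Qed.

Lemma CSlite t a h : 2 * t * g a h <= t ^+ 2 * N a + N h.
Proof.
have := N_ge0 (t%:C%C *: a - h); rewrite NB NZ gZl; lra.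
Qed.

Lemma CSlite2 t a h : 0 < t -> 2 * g a h <= t * N a + t^-1 * N h.
Proof.
move=> t0; rewrite -(ler_pM2l t0) mulrDr !mulrA mulfV ?gt_eqF // mul1r -expr2 [t * 2]mulrC.
exact: CSlite.
Qed.

Lemma ipnorm_lt x e : 0 < e -> N x < e ^+ 2 -> ipnorm ip x < e.
Proof.
move=> e0 h; rewrite /ipnorm -[e in _ < e]gtr0_norm // -sqrtr_sqr ltr_sqrt //.
by rewrite exprn_gt0.
Qed.
Lemma ipnorm_lt_inv x e : ipnorm ip x < e -> N x < e ^+ 2.
Proof.
move=> h; have e0 : 0 < e by apply: le_lt_trans h; exact: sqrtr_ge0.
move: h; rewrite /ipnorm -[e in _ < e]gtr0_norm // -sqrtr_sqr ltr_sqrt //.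
by rewrite exprn_gt0.
Qed.
End IP.

Section Lin.
Variables (R : realType) (X Y : lmodType (R[i])) (T : op X Y).
Hypothesis linT : is_linop T.

Lemma dom0 : dom T 0. Proof. by case: linT. Qed.
Lemma domZD a x y : dom T x -> dom T y -> dom T (a *: x + y).
Proof. by case: linT => _ h hx hy; case: (h a x y hx hy). Qed.
Lemma appZD a x y : dom T x -> dom T y -> app T (a *: x + y) = a *: app T x + app T y.
Proof. by case: linT => _ h hx hy; case: (h a x y hx hy). Qed.
Lemma app0 : app T 0 = 0.
Proof.
have := appZD 1 dom0 dom0; rewrite !scale1r addr0 => h.
by have := congr1 (fun t => t - app T 0) h; rewrite /= subrr addrK.
Qed.
Lemma domZ a x : dom T x -> dom T (a *: x).
Proof. by move=> hx; rewrite -[a *: x]addr0; apply: domZD => //; exact: dom0. Qed.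
Lemma appZ a x : dom T x -> app T (a *: x) = a *: app T x.
Proof. by move=> hx; rewrite -[a *: x]addr0 appZD //; [rewrite app0 addr0 | exact: dom0]. Qed.
Lemma domD x y : dom T x -> dom T y -> dom T (x + y).
Proof. by move=> hx hy; rewrite -[x]scale1r; apply: domZD. Qed.
Lemma appD x y : dom T x -> dom T y -> app T (x + y) = app T x + app T y.
Proof. by move=> hx hy; rewrite -[x in LHS]scale1r appZD // scale1r. Qed.
Lemma domN x : dom T x -> dom T (- x).
Proof. by move=> hx; rewrite -scaleN1r; apply: domZ. Qed.
Lemma appN x : dom T x -> app T (- x) = - app T x.
Proof. by move=> hx; rewrite -scaleN1r appZ // scaleN1r. Qed.
End Lin.

Lemma mid_eq (R : realType) (V : lmodType (R[i])) (w a b : V) :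
  (w - a) + (w - b) = (w - (2^-1 : R[i]) *: (b + a)) *+ 2.
Proof.
have h2 : (2^-1 : R[i]) *+ 2 = 1.
  by rewrite -[_ *+ 2]mulr_natr mulVf // pnatr_eq0.
rewrite mulrnBl scalerMnl h2 scale1r mulr2n opprD addrACA.
by rewrite [- b + _]addrC.
Qed.

Lemma par_id (R : realType) (V : lmodType (R[i])) (ip : V -> V -> R[i]) (hip : is_inner ip) a b :
  N ip (a - b) + N ip (a + b) = 2 * N ip a + 2 * N ip b.
Proof. rewrite (NB hip) (ND hip); lra. Qed.

Lemma small_le0 (R : realType) (c Q : R) : 0 <= Q -> (forall s, 0 < s -> 2 * c <= s * Q) -> c <= 0.
Proof.
move=> Q0 h; rewrite leNgt; apply/negP => c0.
have s0 : 0 < c / (Q + 1) by rewrite divr_gt0 // ltr_wpDl.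
have := h _ s0; rewrite mulrAC ler_pdivlMr ?ltr_wpDl //.
nra.
Qed.

Lemma einv_le (R : realType) (K m : nat) : (K <= m)%N -> (m.+1%:R)^-1 <= (K.+1%:R)^-1 :> R.
Proof. by move=> h; rewrite lef_pV2 ?posrE ?ltr0Sn // ler_nat ltnS. Qed.

Lemma pos_eq0 (R : realType) (a : R) : 0 <= a -> (forall e, 0 < e -> a < e) -> a = 0.
Proof.
move=> a0 h; apply/eqP; rewrite eq_le a0 andbT leNgt; apply/negP => ha.
by have := h a ha; rewrite ltxx.
Qed.

Section Key.
Variables (R : realType) (X Y : lmodType (R[i])) (ipX : X -> X -> R[i]) (ipY : Y -> Y -> R[i]).
Hypotheses (hX : is_hilbert ipX) (hY : is_hilbert ipY).
Variable T : op X Y.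
Hypotheses (linT : is_linop T) (denseT : densely_defined ipX T) (closedT : closed_op ipX ipY T).

Let iX : is_inner ipX := hX.1.
Let iY : is_inner ipY := hY.1.

Lemma adj_spec v : dom (adjoint ipX ipY T) v -> adj_rel ipX ipY T v (app (adjoint ipX ipY T) v).
Proof. by move=> hv; rewrite /adjoint /=; apply: epsilon_spec. Qed.

Lemma adj_uniq c1 c2 : (forall x, dom T x -> ipX x c1 = ipX x c2) -> c1 = c2.
Proof.
move=> h; pose dl := c1 - c2.
have g0 : forall x, dom T x -> g ipX x dl = 0.
  by move=> x hx; rewrite /g (ipBr iX) h // subrr.
suff : N ipX dl = 0 by move/(N_eq0 iX)/eqP; rewrite subr_eq0 => /eqP.
have key : forall y, dom T y -> N ipX dl <= N ipX (dl - y).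
  move=> y hy; have := CSlite iX 1 (dl - y) dl.
  rewrite (gBl iX) (g0 y hy) subr0 expr1n mul1r mulr1.
  change (g ipX dl dl) with (N ipX dl); lra.
case: (ltrP 0 (N ipX dl)) => [pos|le0]; last by have := N_ge0 iX dl; lra.
have sp : 0 < Num.sqrt (N ipX dl) by rewrite sqrtr_gt0.
have [y [hy hlt]] := denseT dl sp.
move: hlt; rewrite /ipnorm ltr_sqrt // => hlt.
by have := key y hy; rewrite /N; lra.
Qed.

Lemma key_lemma w u :
  (forall v, dom (adjoint ipX ipY T) v -> ipY u v = ipX w (app (adjoint ipX ipY T) v)) ->
  dom T w /\ app T w = u.
Proof.
move=> hyp.
pose F x := N ipX (w - x) + N ipY (u - app T x).
have F_ge0 : forall x, 0 <= F x by move=> x; rewrite addr_ge0 // N_ge0.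
pose S : classical_sets.set R := fun r => exists x, dom T x /\ r = F x.
have Sne : classical_sets.nonempty S by exists (F 0); exists 0; split => //; exact: dom0.
have Slb : classical_sets.has_lbound S by exists 0 => r [x [_ ->]].
pose d := inf S.
have hd : forall x, dom T x -> d <= F x.
  by move=> x hx; apply: (ge_inf Slb); exists x.
have d0 : 0 <= d by apply: lb_le_inf => // r [x [_ ->]].
have hadh : forall e, 0 < e -> exists x, dom T x /\ F x < d + e.
  move=> e e0; have [r [x [hx ->]] hr] := inf_adherent e0 (conj Sne Slb).
  by exists x.
pose P n x := dom T x /\ F x < d + (n.+1%:R)^-1.
pose xs n := epsilon (inhabits 0) (P n).
have hxs : forall n, P n (xs n).
  move=> n; apply: epsilon_spec; apply: hadh; by rewrite invr_gt0 ltr0Sn.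
have par : forall m n, N ipX (xs m - xs n) + N ipY (app T (xs m) - app T (xs n))
    <= 2 * (m.+1%:R)^-1 + 2 * (n.+1%:R)^-1.
  move=> m n; have [hm Fm] := hxs m; have [hn Fn] := hxs n.
  pose mid := (2^-1 : R[i]) *: (xs m + xs n).
  have hmid : dom T mid by apply: domZ => //; apply: domD.
  have Tmid : app T mid = (2^-1 : R[i]) *: (app T (xs m) + app T (xs n)).
    by rewrite /mid appZ ?appD //; apply: domD.
  have := hd mid hmid; rewrite /F Tmid.
  have eX : xs m - xs n = (w - xs n) - (w - xs m) by rewrite opprB [RHS]addrC addrA subrK.
  have eY : app T (xs m) - app T (xs n) = (u - app T (xs n)) - (u - app T (xs m))
    by rewrite opprB [RHS]addrC addrA subrK.
  have pX := par_id iX (w - xs n) (w - xs m).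
  have pY := par_id iY (u - app T (xs n)) (u - app T (xs m)).
  rewrite mid_eq (N2 iX) in pX; rewrite mid_eq (N2 iY) in pY.
  rewrite eX eY /mid; move: Fm Fn; rewrite /F.
  set em := (m.+1%:R)^-1; set en := (n.+1%:R)^-1; lra.
have cauchy_gen : forall e, 0 < e -> exists K : nat, forall m n, (K <= m)%N -> (K <= n)%N ->
    N ipX (xs m - xs n) + N ipY (app T (xs m) - app T (xs n)) < e ^+ 2.
  move=> e e0; have e4 : 0 < e ^+ 2 / 4%:R by rewrite divr_gt0 // exprn_gt0.
  have [K hK] := ltr_add_invr e4.
  exists K => m n hm hn; have := par m n.
  have := einv_le R hm; have := einv_le R hn; rewrite add0r in hK; move: hK.
  set E2 := e ^+ 2; set em := (m.+1%:R)^-1; set en := (n.+1%:R)^-1; set eK := (K.+1%:R)^-1; lra.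
have cauchyX : ip_cauchy ipX xs.
  move=> e e0; have [K hK] := cauchy_gen e e0; exists K => m n hm hn.
  apply: ipnorm_lt => //; have := hK m n hm hn; have := N_ge0 iY (app T (xs m) - app T (xs n)); lra.
have cauchyY : ip_cauchy ipY (fun n => app T (xs n)).
  move=> e e0; have [K hK] := cauchy_gen e e0; exists K => m n hm hn.
  apply: ipnorm_lt => //; have := hK m n hm hn; have := N_ge0 iX (xs m - xs n); lra.
have [z hz] := hX.2 _ cauchyX.
have [y hy] := hY.2 _ cauchyY.
have [hzT Tz] := closedT (fun n => (hxs n).1) hz hy.
subst y.
have Fz : F z <= d.
  rewrite leNgt; apply/negP => hlt.
  pose dl := F z - d; have dl0 : 0 < dl by rewrite subr_gt0.
  pose K := d + 2 + dl; have K0 : 0 < K by rewrite /K; lra.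
  pose t := dl / (2 * K).
  have K20 : 0 < 2 * K by rewrite mulr_gt0.
  have t0 : 0 < t by rewrite divr_gt0.
  have tK : t * (2 * K) = dl by rewrite /t divfK // gt_eqF.
  have t2 : 0 < t / 2 by rewrite divr_gt0.
  have [N1 h1] := hz _ t2.
  have [N2 h2] := hy _ t2.
  have [N3 h3] := ltr_add_invr t0.
  pose n := maxn N1 (maxn N2 N3).
  have a1 := ipnorm_lt_inv (h1 n (leq_maxl _ _)).
  have hn2 : (N2 <= n)%N by rewrite leq_max leq_maxl orbT.
  have a2 := ipnorm_lt_inv (h2 n hn2).
  have hn3 : (N3 <= n)%N by rewrite leq_max leq_maxr !orbT.
  have en := einv_le R hn3.
  have [_ Fn] := hxs n.
  have ex : w - z = (w - xs n) + (xs n - z) by rewrite addrA subrK.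
  have ey : u - app T z = (u - app T (xs n)) + (app T (xs n) - app T z) by rewrite addrA subrK.
  have cx := CSlite2 iX (w - xs n) (xs n - z) t0.
  have cy := CSlite2 iY (u - app T (xs n)) (app T (xs n) - app T z) t0.
  have eF : F z = N ipX (w - xs n) + N ipY (u - app T (xs n)) + (N ipX (xs n - z) + N ipY (app T (xs n) - app T z))
     + 2 * g ipX (w - xs n) (xs n - z) + 2 * g ipY (u - app T (xs n)) (app T (xs n) - app T z).
    by rewrite /F ex ey (ND iX (w - xs n)) (ND iY (u - app T (xs n))); lra.
  move: Fn; rewrite -/(F (xs n)) => Fn.
  move: eF cx cy a1 a2 en Fn h3.
  set A := N ipX (w - xs n); set B := N ipY (u - app T (xs n)).
  set qX := N ipX (xs n - z); set qY := N ipY (app T (xs n) - app T z).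
  set gx := g ipX _ _; set gy := g ipY _ _.
  set eN := (N3.+1%:R)^-1; set en' := (n.+1%:R)^-1.
  rewrite add0r => eF cx cy a1 a2 en Fn h3.
  have A0 : 0 <= A := N_ge0 iX _. have B0 : 0 <= B := N_ge0 iY _.
  have hX0 : 0 <= qX := N_ge0 iX _. have hY0 : 0 <= qY := N_ge0 iY _.
  have hF : F (xs n) = A + B by [].
  have s1 : t * (A + B) <= t * (d + t).
    by rewrite ler_wpM2l ?ltW //; lra.
  have s2 : t^-1 * (qX + qY) <= t / 2.
    rewrite mulrC ler_pdivrMr //.
    have : qX + qY <= (t / 2) ^+ 2 *+ 2 by lra.
    move=> h; apply: (le_trans h); rewrite expr2 mulr2n; nra.
  have s3 : dl <= t * (3%:R / 2%:R + 3%:R / 2%:R * t + d).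
    rewrite /dl eF; nra.
  have s4 : 0 <= t * d by rewrite mulr_ge0 // ltW.
  have s5 : t * 4%:R <= dl by rewrite -tK ler_wpM2l ?ltW // /K; lra.
  have s6 : 0 <= t * (dl - t) by rewrite mulr_ge0 ?ltW //; lra.
  have tK' : 2 * (t * d) + 4%:R * t + 2 * (t * dl) = dl by rewrite -[in RHS]tK /K; ring.
  have s3' : dl <= 3%:R / 2%:R * t + 3%:R / 2%:R * (t * t) + t * d.
    by apply: (le_trans s3); rewrite !mulrDr; lra.
  have s6' : t * t <= t * dl by move: s6; rewrite mulrBr subr_ge0.
  lra.
have var : forall x, dom T x -> g ipX (w - z) x + g ipY (u - app T z) (app T x) <= 0.
  move=> x hx.
  apply: (@small_le0 R _ (N ipX x + N ipY (app T x))); first by rewrite addr_ge0 // N_ge0.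
  move=> s s0.
  have hzs : dom T (s%:C%C *: x + z) by apply: domZD.
  have := hd _ hzs; rewrite /F appZD //.
  have r1 : w - (s%:C%C *: x + z) = (w - z) - s%:C%C *: x by rewrite opprD addrA addrAC.
  have r2 : u - (s%:C%C *: app T x + app T z) = (u - app T z) - s%:C%C *: app T x
    by rewrite opprD addrA addrAC.
  rewrite r1 r2 (NB iX) (NB iY) (NZ iX) (NZ iY) (gZr iX) (gZr iY).
  move: Fz; rewrite /F => Fz h.
  rewrite -(ler_pM2l s0); nra.
have orth : forall x, dom T x -> g ipX (w - z) x + g ipY (u - app T z) (app T x) = 0.
  move=> x hx; apply/eqP; rewrite eq_le var //=.
  have := var (- x) (domN linT hx); rewrite appN // (gNr iX) (gNr iY); lra.
have orthI : forall x, dom T x ->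
    g ipX (w - z) ('i *: x) + g ipY (u - app T z) ('i *: app T x) = 0.
  move=> x hx; rewrite -appZ //; apply: orth; exact: domZ.
have adjb : adj_rel ipX ipY T (u - app T z) (z - w).
  move=> x hx; apply: cplx_eq.
    change (g ipY (app T x) (u - app T z) = g ipX x (z - w)).
    rewrite (gC iY) -[z - w]opprB (gNr iX) (gC iX x); have := orth x hx; lra.
  rewrite (ipC iY (u - app T z) (app T x)) ImJ (Im_ip iY) -[z - w]opprB (ipNr iX) ImN.
  rewrite (ipC iX (w - z) x) ImJ opprK (Im_ip iX).
  have := orthI x hx; lra.
have hdom : dom (adjoint ipX ipY T) (u - app T z) by exists (z - w).
have spec := adj_spec hdom.
have ceq : app (adjoint ipX ipY T) (u - app T z) = z - w.
  by apply: adj_uniq => x hx; rewrite -(spec x hx) (adjb x hx).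
have hu := hyp _ hdom; rewrite ceq in hu.
have hzz := adjb z hzT.
have ebb : ipY (u - app T z) (u - app T z) = ipX (w - z) (z - w)
  by rewrite (ipBl iY) hu hzz (ipBl iX).
have eN : N ipY (u - app T z) = - N ipX (w - z)
  by rewrite /N /g ebb -[z - w]opprB (ipNr iX) ReN.
have n1 := N_ge0 iY (u - app T z); have n2 := N_ge0 iX (w - z).
have e1 : N ipY (u - app T z) = 0 by lra.
have e2 : N ipX (w - z) = 0 by lra.
move: (N_eq0 iY e1) (N_eq0 iX e2) => /eqP; rewrite subr_eq0 => /eqP -> /eqP.
by rewrite subr_eq0 => /eqP ->.
Qed.

Lemma adj_easy w u : dom T w -> app T w = u ->
  forall v, dom (adjoint ipX ipY T) v -> ipY u v = ipX w (app (adjoint ipX ipY T) v).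
Proof. by move=> hw <- v hv; apply: adj_spec. Qed.
End Key.

Theorem lemma2p5 (R : realType) (H0 H1 : lmodType (R[i]))
  (ip0 : H0 -> H0 -> R[i]) (ip1 : H1 -> H1 -> R[i])
  (hH0 : is_hilbert ip0) (hH1 : is_hilbert ip1)
  (G : op H0 H1) (D : op H1 H0)
  (linG : is_linop G) (denseG : densely_defined ip0 G) (closedG : closed_op ip0 ip1 G)
  (linD : is_linop D) (denseD : densely_defined ip1 D) (closedD : closed_op ip1 ip0 D)
  (hGD : op_sub (op_neg (adjoint ip0 ip1 G)) D) :
  (forall u : H0,
     BD ip0 ip1 G (op_neg (adjoint ip1 ip0 D)) u <-> ker_I_comp G D u) /\
  (forall q : H1,
     BD ip1 ip0 D (op_neg (adjoint ip0 ip1 G)) q <-> ker_I_comp D G q).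
Proof.
have incl : forall v, dom (adjoint ip1 ip0 D) v ->
    dom G v /\ app G v = - app (adjoint ip1 ip0 D) v.
  move=> v hv; have sp := adj_spec hv.
  apply: (key_lemma hH0 hH1 linG denseG closedG) => y hy.
  have [hDy eDy] := hGD y hy.
  have := sp y hDy; rewrite eDy /= (ipNl hH0.1) => h.
  by rewrite (ipNl hH1.1) (ipC hH1.1 y) (ipC hH0.1 _ v) -h rmorphN opprK.
have incl2 : forall v, dom (adjoint ip0 ip1 G) v ->
    dom D v /\ app D v = - app (adjoint ip0 ip1 G) v.
  by move=> v hv; have [h1 h2] := hGD v hv; split.
split => [u|q]; split.
- case=> hGu hv.
  have hk : forall v, dom (adjoint ip1 ip0 D) v ->
      ip0 u v = ip1 (app G u) (app (adjoint ip1 ip0 D) v).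
    move=> v hv'; have [_ eG] := incl v hv'.
    have := hv v hv'; rewrite eG (ipNr hH1.1) => /eqP.
    by rewrite addr_eq0 opprK => /eqP.
  have [h1 h2] := key_lemma hH1 hH0 linD denseD closedD hk.
  by split.
- case=> hGu [hD hDG]; split => // v hv /=.
  have [_ eG] := incl v hv.
  by rewrite eG (ipNr hH1.1) (adj_easy hD hDG hv) subrr.
- case=> hDq hv.
  have hk : forall v, dom (adjoint ip0 ip1 G) v ->
      ip1 q v = ip0 (app D q) (app (adjoint ip0 ip1 G) v).
    move=> v hv'; have [_ eD] := incl2 v hv'.
    have := hv v hv'; rewrite eD (ipNr hH0.1) => /eqP.
    by rewrite addr_eq0 opprK => /eqP.
  have [h1 h2] := key_lemma hH0 hH1 linG denseG closedG hk.
  by split.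
- case=> hDq [hG hGD']; split => // v hv /=.
  have [_ eD] := incl2 v hv.
  by rewrite eD (ipNr hH0.1) (adj_easy hG hGD' hv) subrr.
Qed.
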